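(* In a network satisfying (H1) and (H2), let $Y+S_0\rightleftarrows U_1\to Y+S_1\rightleftarrows\cdots\rightleftarrows U_L\to Y+S_L$ be a connected component with rate constants $a_j,b_j,c_j$ as in the context and $K_j:=b_j+c_j$. Then $a_L,b_L,c_L$ are identifiable from $s_L$ using the derivatives $\dot s_L,\ddot s_L$; and if $L>1$, the quantities $a_j$ and $K_j$, $1\le j\le L-1$, are identifiable from $s_L$ using $\dot s_L,\ddot s_L,s_L^{(3)}$.
   Context: Species are capital letters, concentrations lower-case letters. Mass-action system of a network with reactions $y\to y'$ and rates $k_{yy'}>0$ (vector $\mathbf{k}$): $\dot{\mathbf{x}}=\sum k_{yy'}\mathbf{x}^y(y'-y)$. Total derivative: $\dot\varphi=\sum_i\frac{\partial\varphi}{\partial x_i}\dot x_i$ with $\dot x_i$ replaced by the right-hand side; $\varphi^{(\ell)}$ its $\ell$-th iterate. A map $\psi$ of $\mathbf{k}$ is identifiable from $x$ using orders $1\le\ell\le D$ if, for positive $\mathbf{k}^*,\mathbf{k}^{**}$, equality $x^{(\ell)}(\mathbf{x},\mathbf{k}^* )=x^{(\ell)}(\mathbf{x},\mathbf{k}^{**})$ as polynomials in $\mathbf{x}$ for all $1\le\ell\le D$ implies $\psi(\mathbf{k}^* )=\psi(\mathbf{k}^{**})$. (H1) Every connected component has the form $Y+S_0\rightleftarrows U_1\to\cdots\rightleftarrows U_L\to Y+S_L$, i.e. reactions $Y+S_{j-1}\to U_j$ (rate $a_j$), $U_j\to Y+S_{j-1}$ (rate $b_j$), $U_j\to Y+S_j$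 (rate $c_j$); unique enzyme $Y$; intermediates distinct throughout the network; non-intermediates of a component pairwise distinct but may appear in other components; each complex in a unique component. $\mathscr{S}_U$ = substrates/products of the component of intermediate $U$. (H2) A partition $\mathscr{S}^{(0)}\sqcup\cdots\sqcup\mathscr{S}^{(M)}$ ($M\ge2$, nonempty, $\mathscr{S}^{(0)}$ the intermediates) with: for each intermediate $U$ with enzyme $Y$, some $\alpha\ge1$ has $\mathscr{S}_U\subseteq\mathscr{S}^{(\alpha)}$, $Y\notin\mathscr{S}^{(\alpha)}$. *)

(* Defs.v *)
From HB Require Import structures.
From mathcomp Require Import all_boot all_order all_algebra.
Set Implicit Arguments. Unset Strict Implicit. Unset Printing Implicit Defensive.
Import Order.TTheory GRing.Theory Num.Theory.
Local Open Scope ring_scope.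

(* ---------- Multivariate polynomials over R in the species T ----------
   A polynomial is a finite formal sum of terms (coefficient, monomial);
   a monomial is an exponent vector T -> nat.  Two such sums are equal
   "as polynomials" when every monomial has the same total coefficient. *)
Section MPoly.
Variables (R : realFieldType) (T : finType).

Definition mono := {ffun T -> nat}.
Definition mpoly := seq (R * mono).

Definition mcoef (p : mpoly) (m : mono) : R := \sum_(t <- p | t.2 == m) t.1.

Definition mpoly_eq (p q : mpoly) : Prop := forall m : mono, mcoef p m = mcoef q m.

Definition mvar (x : T) : mpoly := [:: (1, [ffun z => nat_of_bool (z == x)])].

Definition mmul (p q : mpoly) : mpoly :=
  [seq (t.1 * u.1, [ffun z => (t.2 z + u.2 z)%N]) | t : R * mono <- p, u : R * mono <- q].

Definition mderiv (x : T) (p : mpoly) : mpoly :=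
  [seq (t.1 *+ t.2 x, [ffun z => (t.2 z - nat_of_bool (z == x))%N]) | t : R * mono <- p].

Definition lie (F : T -> mpoly) (p : mpoly) : mpoly :=
  flatten [seq mmul (mderiv x p) (F x) | x <- enum T].

Definition lie_iter (F : T -> mpoly) (l : nat) (x : T) : mpoly := iter l (lie F) (mvar x).

(* Mass-action vector field of reactions (k, y, y'):  sum k x^y (y' - y). *)
Definition mass_action (rs : seq (R * mono * mono)) (z : T) : mpoly :=
  [seq (r.1.1 * ((r.2 z)%:R - (r.1.2 z)%:R), r.1.2) | r : R * mono * mono <- rs].

End MPoly.

Record ecomp (T : Type) := EComp { enz : T; subs : seq T; ints : seq T }.
(* component  Y + S_0 <-> U_1 -> Y + S_1 <-> ... <-> U_L -> Y + S_L,
   enz = Y, subs = [S_0; ...; S_L], ints = [U_1; ...; U_L]. *)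

Section Network.
Variables (R : realFieldType) (T : finType).

Definition cplx1 (U : T) : mono T := [ffun z => nat_of_bool (z == U)].
Definition cplx2 (Y S : T) : mono T := [ffun z => ((z == Y) + (z == S))%N].

Definition S_ (c : ecomp T) (j : nat) : T := nth (enz c) (subs c) j.
Definition U_ (c : ecomp T) (j : nat) : T := nth (enz c) (ints c) j.-1.

Definition comp_reactions (K : nat) (i : 'I_K) (C : ecomp T)
    (a b c : 'I_K -> nat -> R) : seq (R * mono T * mono T) :=
  flatten [seq [:: (a i j, cplx2 (enz C) (S_ C j.-1), cplx1 (U_ C j));
                   (b i j, cplx1 (U_ C j), cplx2 (enz C) (S_ C j.-1));
                   (c i j, cplx1 (U_ C j), cplx2 (enz C) (S_ C j))]
          | j <- iota 1 (size (ints C))].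

Definition net_reactions (K : nat) (N : 'I_K -> ecomp T) (a b c : 'I_K -> nat -> R) :=
  flatten [seq comp_reactions i (N i) a b c | i <- enum 'I_K].

Definition net_field (K : nat) (N : 'I_K -> ecomp T) (a b c : 'I_K -> nat -> R) : T -> mpoly R T :=
  mass_action (net_reactions N a b c).

Definition positive_rates (K : nat) (N : 'I_K -> ecomp T) (a b c : 'I_K -> nat -> R) : Prop :=
  forall (i : 'I_K) (j : nat), (1 <= j <= size (ints (N i)))%N ->
    0 < a i j /\ 0 < b i j /\ 0 < c i j.
End Network.

Section Hyp.
Variables (T : finType).

Definition is_intermediate (K : nat) (N : 'I_K -> ecomp T) (z : T) : Prop :=
  exists i : 'I_K, z \in ints (N i).

Definition is_nonintermediate (K : nat) (N : 'I_K -> ecomp T) (z : T) : Prop :=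
  exists i : 'I_K, z = enz (N i) \/ z \in subs (N i).

Definition H1 (K : nat) (N : 'I_K -> ecomp T) : Prop :=
  [/\
      (forall i, (0 < size (ints (N i)))%N /\ size (subs (N i)) = (size (ints (N i))).+1),
      uniq (flatten [seq ints (N i) | i <- enum 'I_K]),
      (forall z, is_intermediate N z -> ~ is_nonintermediate N z),
       (forall i, uniq (cons (enz (N i)) (subs (N i)))) /\
       (forall i i' : 'I_K, i != i' -> forall S S', S \in subs (N i) -> S' \in subs (N i') ->
         cplx2 (enz (N i)) S != cplx2 (enz (N i')) S')
    &
      (forall z, is_intermediate N z \/ is_nonintermediate N z)].

(* (H2), partition given by the class map part : T -> {0..M} *)
Definition H2 (K : nat) (N : 'I_K -> ecomp T) (part : T -> nat) (M : nat) : Prop :=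
  [/\ (2 <= M)%N,
      (forall z, (part z <= M)%N),
      (forall alpha, (alpha <= M)%N -> exists z, part z = alpha),
      (forall z, part z = 0%N <-> is_intermediate N z)
    & (forall i : 'I_K, exists alpha, (1 <= alpha)%N /\
        (forall S, S \in subs (N i) -> part S = alpha) /\ part (enz (N i)) <> alpha)].
End Hyp.

(* Main.v *)
Require Import Defs.
From HB Require Import structures.
From mathcomp Require Import all_boot all_order all_algebra.
From mathcomp Require Import zify ring.
Import Order.TTheory GRing.Theory Num.Theory.
Set Implicit Arguments. Unset Strict Implicit. Unset Printing Implicit Defensive.
Local Open Scope ring_scope.

Section Gen.
Variables (R : realFieldType) (T : finType).

Definition mon (s : seq T) : mono T := [ffun z => count_mem z s].
Definition ley (y m : mono T) : bool := [forall z, (y z <= m z)%N].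
Definition predm (m y : mono T) (x : T) : mono T := [ffun z => (m z - y z + (z == x))%N].
Definition G (f : mono T -> R) (m : mono T) (r : R * mono T * mono T) : R :=
  if ley r.1.2 m then \sum_(x <- enum T) r.1.1 * ((r.2 x)%:R - (r.1.2 x)%:R)
     * ((m x - r.1.2 x).+1)%:R * f (predm m r.1.2 x) else 0.

Lemma core (t2 y m : mono T) x :
  (if [ffun z => ([ffun z0 => t2 z0 - (z0 == x)] z + y z)%N] == m then t2 x else 0)%N =
  (if ley y m && (t2 == predm m y x) then (m x - y x).+1 else 0)%N.
Proof.
have -> : [ffun z => ([ffun z0 => t2 z0 - (z0 == x)] z + y z)%N] =
  [ffun z => (t2 z - (z == x) + y z)%N] by apply/ffunP => z; rewrite !ffunE.
case: (posnP (t2 x)) => Ht.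
  rewrite Ht if_same; case: ifP => // /andP [_ /eqP E].
  by move: Ht; rewrite E ffunE eqxx addn1.
have E : ([ffun z => (t2 z - (z == x) + y z)%N] == m) = ley y m && (t2 == predm m y x).
  apply/idP/idP.
    move/eqP/ffunP => H; apply/andP; split.
      apply/forallP => z; move: (H z); rewrite ffunE => <-; lia.
    apply/eqP/ffunP => z; move: (H z); rewrite !ffunE => <-.
    case: (eqVneq z x) => [->|_] /=; lia.
  case/andP => /forallP Hl /eqP ->; apply/eqP/ffunP => z; rewrite /predm !ffunE.
  move: (Hl z); move: (m z) (y z) => mz yz; case: (z == x); lia.
rewrite E; case: ifP => // /andP [_ /eqP ->]; rewrite ffunE eqxx addn1 //.
Qed.

Lemma mcoef_lie (rs : seq (R * mono T * mono T)) (p : mpoly R T) m :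
  mcoef (lie (mass_action rs) p) m = \sum_(r <- rs) G (mcoef p) m r.
Proof.
rewrite /mcoef /lie big_flatten /= big_map.
under eq_bigr => x _ do rewrite big_mkcond /mmul big_allpairs_dep /=.
under eq_bigr => x _ do rewrite /mderiv big_map /mass_action /=; under eq_bigr => x _ do under eq_bigr => t _ do rewrite big_map /=.
rewrite exchange_big /=.
under eq_bigr => t _ do rewrite exchange_big /=.
rewrite exchange_big /=.
apply: eq_bigr => r _; rewrite /G.
case: ifP => Hl.
  rewrite exchange_big /=; apply: eq_bigr => x _.
  rewrite big_distrr /= [RHS]big_mkcond /=; apply: eq_bigr => t _.
  move: (core t.2 r.1.2 m x); rewrite Hl /=.
  case: ifP => _; case: ifP => _ h.
  - rewrite h -mulr_natr; ring.
  - by rewrite h mulr0n mul0r.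
  - by move: h.
  - by [].
rewrite big1 // => t _; rewrite big1 // => x _.
move: (core t.2 r.1.2 m x); rewrite Hl /=; case: ifP => // _ ->.
by rewrite mulr0n mul0r.
Qed.


Lemma sum_enum1 (F : T -> R) y : \sum_(x <- enum T) (if x == y then F x else 0) = F y.
Proof. by rewrite big_enum /= -big_mkcond /= big_pred1_eq. Qed.

Lemma sum_count (t : seq T) (h : T -> R) :
  \sum_(x <- enum T) (count_mem x t)%:R * h x = \sum_(z <- t) h z.
Proof.
elim: t => [|z t IH] /=.
  by rewrite big_nil big1 // => x _; rewrite mul0r.
rewrite big_cons -IH.
under eq_bigr => x _ do rewrite natrD mulrDl.
rewrite big_split /=; congr (_ + _).
rewrite -(sum_enum1 h z); apply: eq_bigr => x _; rewrite eq_sym.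
by case: (x == z); rewrite ?mul1r ?mul0r.
Qed.

Lemma monE (s : seq T) z : mon s z = count_mem z s.
Proof. by rewrite ffunE. Qed.

Lemma mon_perm (s t : seq T) : perm_eq s t -> mon s = mon t.
Proof. by move/permP => H; apply/ffunP => z; rewrite !ffunE H. Qed.

Lemma mon_inj (s t : seq T) : mon s = mon t -> perm_eq s t.
Proof.
move=> H; apply/allP => z _; apply/eqP.
by move/ffunP: H => /(_ z); rewrite !ffunE.
Qed.

Lemma mon_eqE (s t : seq T) : (mon s == mon t) = perm_eq s t.
Proof. by apply/eqP/idP; [apply: mon_inj | apply: mon_perm]. Qed.

Lemma ley_sub (s t : seq T) : ley (mon t) (mon s) -> {subset t <= s}.
Proof.
move/forallP => H z zt; move: (H z); rewrite !ffunE => Hc.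
rewrite -has_pred1 has_count in zt *; rewrite -has_pred1 has_count; exact: leq_trans zt Hc.
Qed.

Lemma ley_perm (s t u : seq T) : perm_eq s (t ++ u) -> ley (mon t) (mon s).
Proof.
move/permP => H; apply/forallP => z; rewrite !ffunE (H (pred1 z)) count_cat.
exact: leq_addr.
Qed.

Lemma G_zero (f : mono T -> R) m r : ~~ ley r.1.2 m -> G f m r = 0.
Proof. by rewrite /G => /negbTE ->. Qed.

Lemma G_mon (f : mono T -> R) (s t t' u : seq T) k :
  perm_eq s (t ++ u) ->
  G f (mon s) (k, mon t, mon t') =
  k * (\sum_(z <- t') ((count_mem z u).+1%:R * f (mon (z :: u)))
     - \sum_(z <- t) ((count_mem z u).+1%:R * f (mon (z :: u)))).
Proof.
move=> Hp; rewrite /G (ley_perm Hp) /=.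
have Hc : forall x, (mon s x - mon t x)%N = count_mem x u.
  by move=> x; move/permP: Hp => H; rewrite !ffunE (H (pred1 x)) count_cat addKn.
have Hq : forall x, predm (mon s) (mon t) x = mon (x :: u).
  move=> x; apply/ffunP => z; have := Hc z; rewrite /predm !ffunE => ->.
  by rewrite /= addnC eq_sym.
rewrite -(sum_count t') -(sum_count t) -sumrB big_distrr /=.
apply: eq_bigr => x _; rewrite Hc Hq !monE; ring.
Qed.


Lemma mvar_mon (x : T) : [ffun z => nat_of_bool (z == x)] = mon [:: x].
Proof. by apply/ffunP => z; rewrite !ffunE /= addn0 eq_sym. Qed.

Lemma mcoef_mvar (x : T) m : mcoef (mvar R x) m = if mon [:: x] == m then 1 else 0.
Proof. by rewrite /mcoef /mvar big_mkcond big_cons big_nil /= addr0 mvar_mon. Qed.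

Lemma predm_one m y x z : ley y m -> (predm m y x == mon [:: z]) = (y == m) && (x == z).
Proof.
move=> /forallP Hl; apply/eqP/andP.
  move/ffunP => H; have Hx := H x; rewrite !ffunE /= eqxx addn0 in Hx.
  have xz : z = x by move: Hx; case: eqP => //= _; lia.
  subst z; split => //; apply/eqP/ffunP => w; move: (H w) (Hl w); rewrite !ffunE /= addn0.
  by rewrite eq_sym; case: (w == x) => /=; lia.
case=> /eqP <- /eqP <-; apply/ffunP => w; rewrite !ffunE /= addn0 subnn eq_sym //.
Qed.

Lemma G_c1 (x : T) m r :
  G (mcoef (mvar R x)) m r = if r.1.2 == m then r.1.1 * ((r.2 x)%:R - (r.1.2 x)%:R) else 0.
Proof.
rewrite /G; case: ifP => Hl.
  under eq_bigr => z _ do rewrite mcoef_mvar eq_sym predm_one //.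
  case: eqP => [<-|_].
    rewrite -[RHS](sum_enum1 (fun z => r.1.1 * ((r.2 z)%:R - (r.1.2 z)%:R)) x).
    apply: eq_bigr => z _ /=; rewrite subnn mulr1.
    by case: (z == x); rewrite ?mulr1 ?mulr0.
  by rewrite big1 // => z _; rewrite /= mulr0.
case: eqP => // E; move: Hl; rewrite E.
by have -> : ley m m by apply/forallP.
Qed.
End Gen.


Lemma cplx1E (T : finType) (U : T) : cplx1 U = mon [:: U].
Proof. by apply/ffunP => z; rewrite !ffunE /= addn0 eq_sym. Qed.
Lemma cplx2E (T : finType) (Y S : T) : cplx2 Y S = mon [:: Y; S].
Proof. by apply/ffunP => z; rewrite !ffunE /= addn0 ![_ == z]eq_sym. Qed.

Lemma perm1 (T : eqType) (a b : T) : perm_eq [:: a] [:: b] -> a = b.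
Proof. by move/perm_mem/(_ a); rewrite !inE eqxx => /esym/eqP. Qed.

Lemma perm2 (T : eqType) (a b c d : T) : perm_eq [:: a; b] [:: c; d] ->
  (a = c /\ b = d) \/ (a = d /\ b = c).
Proof.
move=> H; have : a \in [:: c; d] by rewrite -(perm_mem H) mem_head.
rewrite !inE => /orP [/eqP E|/eqP E]; subst a.
  by left; split => //; apply: perm1; rewrite -(perm_cons c).
right; split => //; apply: perm1; rewrite -(perm_cons d).
by apply: (perm_trans H); rewrite (perm_catC [:: c] [:: d]).
Qed.

Lemma flatten_uniq_disj (I V : eqType) (f : I -> seq V) s x y z :
  uniq (flatten (map f s)) -> x \in s -> y \in s -> z \in f x -> z \in f y -> x = y.
Proof.
elim: s => //= a s IH; rewrite cat_uniq => /and3P [_ hn hu].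
rewrite !inE => /predU1P [->|xs] /predU1P [->|ys] zx zy //.
- case/negP: hn; apply/hasP; exists z => //; apply/flatten_mapP; by exists y.
- case/negP: hn; apply/hasP; exists z => //; apply/flatten_mapP; by exists x.
- exact: IH.
Qed.

Lemma flatten_uniq_each (I V : eqType) (f : I -> seq V) s x :
  uniq (flatten (map f s)) -> x \in s -> uniq (f x).
Proof.
elim: s => //= a s IH; rewrite cat_uniq => /and3P [ha _ hu].
by rewrite inE => /predU1P [->|xs] //; apply: IH.
Qed.

Lemma swap2 (T : eqType) (a b : T) : perm_eq [:: a; b] [:: b; a].
Proof. by rewrite -[[:: a; b]]/([:: a] ++ [:: b]) (perm_catC [:: a] [:: b]). Qed.

Section Net.
Variables (R : realFieldType) (T : finType) (K : nat) (N : 'I_K -> ecomp T)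
  (part : T -> nat) (M : nat) (i0 : 'I_K).
Hypotheses (h1 : H1 N) (h2 : H2 N part M).

Local Notation L := (size (ints (N i0))).
Local Notation Y := (enz (N i0)).
Local Notation S := (S_ (N i0)).
Local Notation U := (U_ (N i0)).

Lemma Uint i j : (1 <= j <= size (ints (N i)))%N -> U_ (N i) j \in ints (N i).
Proof. by move=> /andP [j1 j2]; rewrite /U_ mem_nth //; case: j j1 j2. Qed.

Lemma Ssub i k : (k <= size (ints (N i)))%N -> S_ (N i) k \in subs (N i).
Proof.
move=> hk; case: h1 => /(_ i) [_ hs] _ _ _ _.
by rewrite /S_ mem_nth // hs ltnS.
Qed.


Lemma int_ne i j i' w : (1 <= j <= size (ints (N i)))%N ->
  (w = enz (N i') \/ w \in subs (N i')) -> U_ (N i) j != w.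
Proof.
move=> hj hw; apply/eqP => E; case: h1 => _ _ h _ _.
by apply: (h (U_ (N i) j)); [exists i; apply: Uint | exists i'; rewrite E].
Qed.

Lemma U_inj i j i' j' : (1 <= j <= size (ints (N i)))%N -> (1 <= j' <= size (ints (N i')))%N ->
  U_ (N i) j = U_ (N i') j' -> i = i' /\ j = j'.
Proof.
move=> hj hj' E; case: h1 => _ hu _ _ _.
have ii : i = i'.
  apply: (flatten_uniq_disj hu (mem_enum _ i) (mem_enum _ i') (Uint hj)).
  by rewrite E; apply: Uint.
subst i'; split => //.
have hui := flatten_uniq_each hu (mem_enum _ i).
have l1 : (j.-1 < size (ints (N i)))%N by case: (j) hj => // k /andP [].
have l2 : (j'.-1 < size (ints (N i)))%N by case: (j') hj' => // k /andP [].
move: E; rewrite /U_ => /eqP; rewrite nth_uniq // => /eqP.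
by case: j hj l1 => // j _ _; case: j' hj' l2 => // j' _ _ /= ->.
Qed.

Lemma enz_notin i : enz (N i) \notin subs (N i).
Proof. by case: h1 => _ _ _ [hu _] _; move: (hu i) => /= /andP []. Qed.

Lemma enz_sub_ne i S' : S' \in subs (N i) -> enz (N i) != S'.
Proof. by move=> hS; apply/eqP => E; move: (enz_notin i); rewrite E hS. Qed.

Lemma no_two_subs C S' : S' \in subs (N C) -> enz (N C) \in subs (N i0) ->
  S' \in subs (N i0) -> False.
Proof.
case: h2 => _ _ _ _ hc hS he hS'.
case: (hc i0) => al0 [_ [H0 _]]; case: (hc C) => alC [_ [HC HCe]].
by apply: HCe; rewrite (H0 _ he) -(H0 _ hS') (HC _ hS).
Qed.

Lemma S_inj k k' : (k <= L)%N -> (k' <= L)%N -> S k = S k' -> k = k'.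
Proof.
move=> hk hk' E; case: h1 => /(_ i0) [_ hs] _ _ [hu _] _.
move: (hu i0) => /= /andP [_ hu'].
by move: E; rewrite /S_ => /eqP; rewrite nth_uniq ?hs ?ltnS // => /eqP.
Qed.

Lemma cplx_unique C S' k : S' \in subs (N C) -> (k <= L)%N ->
  perm_eq [:: enz (N C); S'] [:: Y; S k] -> C = i0 /\ S' = S k.
Proof.
move=> hS hk /perm2 [[e1 e2]|[e1 e2]].
  split=> //; apply/eqP; apply/negPn/negP => ne.
  case: h1 => _ _ _ [_ hc] _.
  by move: (hc C i0 ne S' (S k) hS (Ssub hk)); rewrite e1 e2 eqxx.
have hsk := Ssub hk.
case: (eqVneq C i0) => [E|ne].
  by subst C; move: (enz_notin i0); rewrite e1 hsk.
case: h1 => _ _ _ [_ hc] _.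
move: (hc C i0 ne S' (S k) hS hsk); rewrite e1 e2 !cplx2E.
by rewrite (mon_perm (swap2 (S k) Y)) eqxx.
Qed.

Lemma Lpos : (0 < L)%N.
Proof. by case: h1 => /(_ i0) [] . Qed.

Lemma perm1E (a b : T) : perm_eq [:: a] [:: b] = (a == b).
Proof. by apply/idP/eqP => [/perm1|->]. Qed.

Lemma perm21 (a b c : T) : perm_eq [:: a; b] [:: c] = false.
Proof. by apply/negP => /perm_size. Qed.
Lemma perm12 (a b c : T) : perm_eq [:: c] [:: a; b] = false.
Proof. by apply/negP => /perm_size. Qed.

Lemma YS k : (k <= L)%N -> (Y == S k) = false.
Proof. by move=> hk; apply/negbTE/enz_sub_ne/Ssub. Qed.
Lemma SY k : (k <= L)%N -> (S k == Y) = false.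
Proof. by move=> hk; rewrite eq_sym YS. Qed.
Lemma SS k k' : (k <= L)%N -> (k' <= L)%N -> (S k == S k') = (k == k').
Proof. by move=> hk hk'; apply/eqP/eqP => [/S_inj|->] //; apply. Qed.
Lemma Unon i j w : (1 <= j <= size (ints (N i)))%N ->
  (exists i', w = enz (N i') \/ w \in subs (N i')) -> (U_ (N i) j == w) = false.
Proof. by move=> hj [i' hw]; apply/negbTE/(int_ne hj hw). Qed.
Lemma nonU i j w : (1 <= j <= size (ints (N i)))%N ->
  (exists i', w = enz (N i') \/ w \in subs (N i')) -> (w == U_ (N i) j) = false.
Proof. by move=> hj hw; rewrite eq_sym Unon. Qed.
Lemma nonY : exists i', Y = enz (N i') \/ Y \in subs (N i').
Proof. by exists i0; left. Qed.
Lemma nonS k : (k <= L)%N -> exists i', S k = enz (N i') \/ S k \in subs (N i').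
Proof. by move=> hk; exists i0; right; apply: Ssub. Qed.
Lemma Ueq i j j' : (1 <= j <= size (ints (N i)))%N -> (1 <= j' <= L)%N ->
  (U_ (N i) j == U j') = (i == i0) && (j == j').
Proof.
move=> hj hj'; apply/eqP/andP => [/(U_inj hj hj') [-> ->] //|[/eqP -> /eqP ->]] //.
Qed.

Lemma A_mem i j s : ley (mon [:: enz (N i); S_ (N i) j.-1]) (mon s) ->
  enz (N i) \in s /\ S_ (N i) j.-1 \in s.
Proof. by move/ley_sub => H; split; apply: H; rewrite !inE eqxx ?orbT. Qed.
Lemma U_mem i j s : ley (mon [:: U_ (N i) j]) (mon s) -> U_ (N i) j \in s.
Proof. by move/ley_sub => H; apply: H; rewrite !inE eqxx. Qed.

Lemma iota_range j n : j \in iota 1 n -> (1 <= j <= n)%N.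
Proof. by rewrite mem_iota; lia. Qed.

Lemma collapse (g : 'I_K -> nat -> R) (i1 : 'I_K) j1 v :
  (1 <= j1 <= size (ints (N i1)))%N ->
  (forall i j, (1 <= j <= size (ints (N i)))%N -> g i j = if (i == i1) && (j == j1) then v else 0) ->
  \sum_(i <- enum 'I_K) \sum_(j <- iota 1 (size (ints (N i)))) g i j = v.
Proof.
move=> hj1 hg.
rewrite (bigD1_seq i1) ?mem_enum ?enum_uniq //=.
rewrite [X in _ + X]big1_seq ?addr0; last first.
  move=> i /andP [ne _]; rewrite big1_seq // => j /andP [_ hj].
  by rewrite hg ?(iota_range hj) ?(negbTE ne).
rewrite (bigD1_seq j1) ?iota_uniq //= ?mem_iota ?addn1 //.
rewrite hg ?eqxx // [X in _ + X]big1_seq ?addr0 // => j /andP [ne hj].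
by rewrite hg ?(iota_range hj) ?(negbTE ne) ?andbF.
Qed.

Lemma sum_zero (g : 'I_K -> nat -> R) :
  (forall i j, (1 <= j <= size (ints (N i)))%N -> g i j = 0) ->
  \sum_(i <- enum 'I_K) \sum_(j <- iota 1 (size (ints (N i)))) g i j = 0.
Proof.
move=> hg; rewrite big1 // => i _; rewrite big1_seq // => j /andP [_ hj].
by rewrite hg ?(iota_range hj).
Qed.

Lemma Srange i j : (1 <= j <= size (ints (N i)))%N -> S_ (N i) j.-1 \in subs (N i).
Proof. by move=> hj; apply: Ssub; case: (j) hj => // k /andP [] /=; lia. Qed.

Lemma A_id i j : (1 <= j <= size (ints (N i)))%N ->
  enz (N i) \in Y :: subs (N i0) -> S_ (N i) j.-1 \in Y :: subs (N i0) -> i = i0.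
Proof.
move=> hj he hs; have hS' := Srange hj.
case: h1 => _ _ _ [_ hc] _.
case: (eqVneq i i0) => // ne; exfalso.
move: he hs; rewrite !inE => /predU1P [e|e] /predU1P [s'|s'].
- by move: (enz_sub_ne hS'); rewrite e s' eqxx.
- by move: (hc i i0 ne _ _ hS' s'); rewrite e eqxx.
- move: (hc i i0 ne _ _ hS' e); rewrite s' !cplx2E.
  by rewrite (mon_perm (swap2 (enz (N i)) Y)) eqxx.
- exact: (no_two_subs hS' e s').
Qed.

Lemma memYS x (ks : seq nat) : all (fun k => k <= L)%N ks ->
  x \in Y :: map S ks -> x \in Y :: subs (N i0).
Proof.
move=> /allP hk; rewrite !inE => /predU1P [->|]; first by rewrite eqxx.
by case/mapP => k kin ->; rewrite Ssub ?orbT // hk.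
Qed.

Lemma S_idx j k : (1 <= j <= L)%N -> (k <= L)%N -> S j.-1 = S k -> j = k.+1.
Proof.
move=> hj hk E; have hj' : (j.-1 <= L)%N by case: (j) hj => // n /andP [] /=; lia.
by move: (S_inj hj' hk E) => <-; case: (j) hj.
Qed.

Section Rates.
Variables (a b c : 'I_K -> nat -> R).

Definition rsN := net_reactions N a b c.
Definition cl l := mcoef (lie_iter (net_field N a b c) l (S L)).
Definition tripG (f : mono T -> R) m i j :=
  G f m (a i j, mon [:: enz (N i); S_ (N i) j.-1], mon [:: U_ (N i) j]) +
  G f m (b i j, mon [:: U_ (N i) j], mon [:: enz (N i); S_ (N i) j.-1]) +
  G f m (c i j, mon [:: U_ (N i) j], mon [:: enz (N i); S_ (N i) j]).

Lemma cl_succ l m : cl l.+1 m =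
  \sum_(i <- enum 'I_K) \sum_(j <- iota 1 (size (ints (N i)))) tripG (cl l) m i j.
Proof.
rewrite /cl /lie_iter iterS /net_field mcoef_lie /net_reactions big_flatten big_map.
apply: eq_bigr => i _; rewrite /comp_reactions big_flatten big_map.
apply: eq_bigr => j _; rewrite !big_cons big_nil /= addr0 !cplx1E !cplx2E addrA //.
Qed.

Lemma cl0 m : cl 0 m = if mon [:: S L] == m then 1 else 0.
Proof. exact: mcoef_mvar. Qed.


Lemma cl0E : cl 0 = mcoef (mvar R (S L)).
Proof. by []. Qed.

Lemma V1U j : (1 <= j <= L)%N -> cl 1 (mon [:: U j]) = if j == L then c i0 L else 0.
Proof.
move=> hj.
rewrite cl_succ (collapse (i1 := i0) (j1 := j)
  (v := b i0 j * ((mon [:: Y; S j.-1] (S L))%:R - (mon [:: U j] (S L))%:R)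
      + c i0 j * ((mon [:: Y; S j] (S L))%:R - (mon [:: U j] (S L))%:R))) //.
  have hj1 : (j.-1 <= L)%N by case: (j) hj => // k /andP []; lia.
  have hj2 : (j <= L)%N by case/andP: hj.
  rewrite !monE /= YS //. rewrite (SS hj1) //. rewrite (Unon hj (nonS (leqnn L))). have e : (S j == S L) = (j == L) by apply: SS. rewrite e.
  have hl : (j.-1 < L)%N by move: Lpos hj2; case: (j) => //= n; lia.
  rewrite (ltn_eqF hl); case: eqP => [->|ne] /=; last by rewrite !subr0 !mulr0 !addr0.
  by rewrite !subr0 mulr0 mulr1 add0r.
move=> i j' hj'; rewrite /tripG cl0E !G_c1 /= !mon_eqE perm21 perm1E Ueq //.
case: andP => [[/eqP -> /eqP ->]|_] //=; first by rewrite add0r.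
by rewrite !addr0.
Qed.

Lemma V1N w : (exists i', w = enz (N i') \/ w \in subs (N i')) -> cl 1 (mon [:: w]) = 0.
Proof.
move=> hw; rewrite cl_succ sum_zero // => i j hj.
by rewrite /tripG cl0E !G_c1 /= !mon_eqE perm21 perm1E (Unon hj hw) /= !addr0.
Qed.

Lemma V1S p x : (p < L)%N -> cl 1 (mon [:: S p; x]) = 0.
Proof.
move=> hp; rewrite cl_succ sum_zero // => i j hj.
rewrite /tripG cl0E !G_c1 /= !mon_eqE !perm12 /= !addr0.
case: ifP => // hperm.
rewrite (mon_perm hperm) !monE /= (Unon hj (nonS (leqnn L))) (SS (k := p) (k' := L)) ?(ltnW hp) //.
have -> : (p == L) = false by apply/negbTE; rewrite neq_ltn hp.
case: (eqVneq x (S L)) => [ex|nx].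
  exfalso; subst x; have hS' := Srange hj.
  move/perm2: hperm => [[e1 e2]|[e1 e2]]; apply: (no_two_subs hS');
    rewrite ?e1 ?e2; apply: Ssub => //; exact: ltnW.
by rewrite /= subrr mulr0.
Qed.


Lemma V2Y k : (k < L)%N -> cl 2 (mon [:: Y; S k]) = a i0 k.+1 * cl 1 (mon [:: U k.+1]).
Proof.
move=> hk; have hk' := ltnW hk.
rewrite cl_succ (collapse (i1 := i0) (j1 := k.+1) (v := a i0 k.+1 * cl 1 (mon [:: U k.+1]))) //.
move=> i j hj; rewrite /tripG.
rewrite (G_zero _ _ (r := (b i j, _, _))); last first.
  by apply/negP => /U_mem; rewrite !inE (Unon hj nonY) (Unon hj (nonS hk')).
rewrite (G_zero _ _ (r := (c i j, _, _))); last first.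
  by apply/negP => /U_mem; rewrite !inE (Unon hj nonY) (Unon hj (nonS hk')).
rewrite !addr0.
case Hl: (ley (mon [:: enz (N i); S_ (N i) j.-1]) (mon [:: Y; S k])); last first.
  rewrite G_zero ?Hl //; case: andP => // [[/eqP ei /eqP ej]]; subst i j.
  by move: Hl; rewrite /= (ley_perm (u := [::])) ?cats0.
have [he hs] := A_mem Hl.
have ei : i = i0 by apply: (A_id hj); apply: (memYS (ks := [:: k])); rewrite /= ?hk'.
subst i.
have ej : j = k.+1.
  apply: S_idx => //; move: hs; rewrite !inE => /predU1P [E|/eqP //].
  by move: E; rewrite /S_ -/(S_ (N i0) j.-1) => /eqP; rewrite SY //; case: (j) hj => // n /andP [] /=; lia.
subst j; rewrite !eqxx /=.
rewrite (@G_mon _ _ _ _ _ _ [::]) ?cats0 // !big_cons !big_nil /=.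
by rewrite (V1N nonY) (V1N (nonS hk')) !mulr0 !addr0 subr0 mul1r.
Qed.


Lemma V2U : cl 2 (mon [:: U L]) = - (b i0 L + c i0 L) * c i0 L.
Proof.
have hL : (1 <= L <= L)%N by rewrite leqnn andbT Lpos.
rewrite cl_succ (collapse (i1 := i0) (j1 := L) (v := - (b i0 L + c i0 L) * c i0 L)) //.
move=> i j hj; rewrite /tripG.
rewrite (G_zero _ _ (r := (a i j, _, _))); last first.
  apply/negP => /A_mem [he _]; move: he; rewrite !inE (nonU hL) //.
  by exists i; left.
rewrite add0r.
case E: ((i == i0) && (j == L)); last first.
  rewrite !G_zero ?addr0 //; apply/negP => /U_mem; rewrite inE Ueq //; by rewrite E.
case/andP: E => /eqP ei /eqP ej; subst i j.
rewrite !(@G_mon _ _ _ _ _ _ [::]) ?cats0 // !big_cons !big_nil /=.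
rewrite !mul1r (V1N nonY) (V1N (nonS (leq_pred L))) (V1N (nonS (leqnn L))) (V1U hL) eqxx.
ring.
Qed.

Lemma V1S' p w : (p < L)%N -> cl 1 (mon [:: w; S p]) = 0.
Proof. by move=> hp; rewrite (mon_perm (swap2 w (S p))) V1S. Qed.

Lemma V2I p i' j' : (p < L)%N -> (1 <= j' <= size (ints (N i')))%N ->
  cl 2 (mon [:: S p; U_ (N i') j']) = 0.
Proof.
move=> hp hj'; rewrite cl_succ sum_zero // => i j hj; rewrite /tripG.
rewrite (G_zero _ _ (r := (a i j, _, _))); last first.
  apply/negP => /A_mem [he hs]; move: he hs; rewrite !inE.
  rewrite (nonU hj' (w := enz (N i))); last by exists i; left.
  rewrite (nonU hj' (w := S_ (N i) j.-1)); last by exists i; right; apply: Srange.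
  rewrite !orbF => /eqP e1 /eqP e2.
  by move: (enz_sub_ne (Srange hj)); rewrite e1 e2 eqxx.
rewrite add0r.
have HBC : forall k (t' : seq T), G (cl 1) (mon [:: S p; U_ (N i') j']) (k, mon [:: U_ (N i) j], mon t') = 0.
  move=> k t'; case: (boolP (ley (mon [:: U_ (N i) j]) (mon [:: S p; U_ (N i') j']))) => Hl; last by rewrite G_zero.
  move: (U_mem Hl); rewrite !inE (Unon hj (nonS (ltnW hp))) /= => /eqP E.
  rewrite (@G_mon _ _ _ _ _ _ [:: S p]); last by rewrite E /= swap2.
  rewrite !big1 ?subrr ?mulr0 // => w _; by rewrite V1S' // mulr0.
by rewrite !HBC addr0.
Qed.

Lemma V2SS p q : (p <= L)%N -> (q <= L)%N -> cl 2 (mon [:: S p; S q]) = 0.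
Proof.
move=> hp hq; rewrite cl_succ sum_zero // => i j hj; rewrite /tripG.
rewrite !G_zero ?addr0 //.
- apply/negP => /U_mem; rewrite !inE (Unon hj (nonS hp)) (Unon hj (nonS hq)) //.
- apply/negP => /U_mem; rewrite !inE (Unon hj (nonS hp)) (Unon hj (nonS hq)) //.
- apply/negP => /A_mem [he hs]; apply: (no_two_subs (Srange hj)).
    by move: he; rewrite !inE => /orP [] /eqP ->; apply: Ssub.
  by move: hs; rewrite !inE => /orP [] /eqP ->; apply: Ssub.
Qed.


Lemma V2YL : cl 2 (mon [:: Y; S L.-1]) = a i0 L * c i0 L.
Proof.
have hL : (1 <= L <= L)%N by rewrite leqnn andbT Lpos.
have hp : (L.-1 < L)%N by move: Lpos; case: (L).
by rewrite V2Y // prednK ?Lpos // (V1U hL) eqxx.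
Qed.

Lemma V2Yj j : (1 <= j)%N -> (j < L)%N -> cl 2 (mon [:: Y; S j.-1]) = 0.
Proof.
move=> hj1 hjL; have hp : (j.-1 < L)%N by case: (j) hj1 hjL => //= n _; lia.
rewrite V2Y // prednK // V1U; last by rewrite hj1 ltnW.
by rewrite (ltn_eqF hjL) mulr0.
Qed.

Lemma V3U j : (1 <= j)%N -> (j < L)%N ->
  cl 3 (mon [:: U j; S L.-1]) = (b i0 j + c i0 j) * (a i0 L * c i0 L).
Proof.
move=> hj1 hjL.
have hj : (1 <= j <= L)%N by rewrite hj1 ltnW.
have hL1 : (L.-1 < L)%N by move: Lpos; case: (L).
have hL1' := ltnW hL1.
have hjp : (j.-1 <= L)%N by case: (j) hj1 hjL => //= n _; lia.
rewrite cl_succ (collapse (i1 := i0) (j1 := j) (v := (b i0 j + c i0 j) * (a i0 L * c i0 L))) //.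
move=> i j' hj'; rewrite /tripG.
rewrite (G_zero _ _ (r := (a i j', _, _))); last first.
  apply/negP => /A_mem [he hs]; move: he hs; rewrite !inE.
  rewrite (nonU hj (w := enz (N i))); last by exists i; left.
  rewrite (nonU hj (w := S_ (N i) j'.-1)); last by exists i; right; apply: Srange.
  move=> /eqP e1 /eqP e2.
  by move: (enz_sub_ne (Srange hj')); rewrite e1 e2 eqxx.
rewrite add0r.
case E: ((i == i0) && (j' == j)); last first.
  rewrite !G_zero ?addr0 //; apply/negP => /U_mem; rewrite !inE Ueq //.
    by rewrite E (Unon hj' (nonS hL1')).
  by rewrite E (Unon hj' (nonS hL1')).
case/andP: E => /eqP ei /eqP ej; subst i j'.
rewrite !(@G_mon _ _ _ _ _ _ [:: S L.-1]) // !big_cons !big_nil /=.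
rewrite (SY hL1') V2YL (V2SS hjp hL1') (V2SS (ltnW hjL) hL1').
rewrite (mon_perm (swap2 (U j) (S L.-1))) (V2I hL1 hj).
rewrite !mulr0 !add0r !addr0 !subr0 mul1r; ring.
Qed.

Lemma V3Y j : (1 <= j)%N -> (j < L)%N ->
  cl 3 (mon [:: Y; S j.-1; S L.-1]) = - a i0 j * (a i0 L * c i0 L).
Proof.
move=> hj1 hjL.
have hj : (1 <= j <= L)%N by rewrite hj1 ltnW.
have hL1 : (L.-1 < L)%N by move: Lpos; case: (L).
have hL1' := ltnW hL1.
have hjp : (j.-1 < L)%N by case: (j) hj1 hjL => //= n _; lia.
have hjp' := ltnW hjp.
have hL : (1 <= L <= L)%N by rewrite leqnn andbT Lpos.
have pL : perm_eq [:: Y; S j.-1; S L.-1] ([:: Y; S L.-1] ++ [:: S j.-1]).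
  by rewrite /= perm_cons swap2.
rewrite cl_succ (collapse (i1 := i0) (j1 := j) (v := - a i0 j * (a i0 L * c i0 L))) //.
move=> i j' hj'; rewrite /tripG.
rewrite (G_zero _ _ (r := (b i j', _, _))); last first.
  by apply/negP => /U_mem; rewrite !inE (Unon hj' nonY) (Unon hj' (nonS hjp')) (Unon hj' (nonS hL1')).
rewrite (G_zero _ _ (r := (c i j', _, _))); last first.
  by apply/negP => /U_mem; rewrite !inE (Unon hj' nonY) (Unon hj' (nonS hjp')) (Unon hj' (nonS hL1')).
rewrite !addr0.
case Hl: (ley (mon [:: enz (N i); S_ (N i) j'.-1]) (mon [:: Y; S j.-1; S L.-1])); last first.
  rewrite G_zero ?Hl //; case: andP => // [[/eqP ei /eqP ej]]; subst i j'.
  by move: Hl; rewrite /= (@ley_perm _ _ _ [:: S L.-1]).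
have [he hs] := A_mem Hl.
have ei : i = i0.
  by apply: (A_id hj'); apply: (memYS (ks := [:: j.-1; L.-1])); rewrite /= ?hjp' ?hL1'.
subst i.
have hj'L : (1 <= j' <= L)%N by [].
move: hs; rewrite !inE => /or3P [/eqP E|/eqP E|/eqP E].
- by move: E => /eqP; rewrite SY //; case: (j') hj' => // n /andP [] /=; lia.
- have ej := S_idx hj'L hjp' E; rewrite prednK // in ej; subst j'; rewrite !eqxx.
  rewrite (@G_mon _ _ _ _ _ _ [:: S L.-1]) // !big_cons !big_nil /=.
  rewrite (SY hL1') V2YL (V2SS hjp' hL1') (mon_perm (swap2 (U j) (S L.-1))) (V2I hL1 hj).
  rewrite !mulr0 !add0r !addr0 mul1r; ring.
- have ej := S_idx hj'L hL1' E; rewrite prednK ?Lpos // in ej; subst j'.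
  rewrite eqxx /= (gtn_eqF hjL).
  rewrite (@G_mon _ _ _ _ _ _ [:: S j.-1]); last exact: pL.
  rewrite !big_cons !big_nil /=.
  rewrite (SY hjp') (V2Yj hj1 hjL) (V2SS hL1' hjp') (mon_perm (swap2 (U L) (S j.-1))) (V2I hjp hL).
  by rewrite !mulr0 !addr0 subrr mulr0.
Qed.

End Rates.
End Net.

Unset Implicit Arguments. Set Strict Implicit. Set Printing Implicit Defensive.

Theorem mainTheorem7 (R : realFieldType) (T : finType) (K : nat) (N : 'I_K -> ecomp T)
    (part : T -> nat) (M : nat) (i0 : 'I_K)
    (a1 b1 c1 a2 b2 c2 : 'I_K -> nat -> R) :
  H1 N -> H2 N part M ->
  positive_rates N a1 b1 c1 -> positive_rates N a2 b2 c2 ->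
  let L := size (ints (N i0)) in
  let sL := S_ (N i0) L in
  let F1 := net_field N a1 b1 c1 in
  let F2 := net_field N a2 b2 c2 in
  ((forall l : nat, (1 <= l <= 2)%N -> mpoly_eq (lie_iter F1 l sL) (lie_iter F2 l sL)) ->
     [/\ a1 i0 L = a2 i0 L, b1 i0 L = b2 i0 L & c1 i0 L = c2 i0 L]) /\
  ((1 < L)%N ->
   (forall l : nat, (1 <= l <= 3)%N -> mpoly_eq (lie_iter F1 l sL) (lie_iter F2 l sL)) ->
     forall j : nat, (1 <= j <= L - 1)%N ->
       a1 i0 j = a2 i0 j /\ b1 i0 j + c1 i0 j = b2 i0 j + c2 i0 j).
Proof.
move=> h1 h2 p1 p2 L sL F1 F2.
have hL : (1 <= L <= L)%N by rewrite leqnn andbT (Lpos i0 h1).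
have [pa1 [pb1 pc1]] := p1 i0 L hL.
have [pa2 [pb2 pc2]] := p2 i0 L hL.
have EQ : forall l m, (1 <= l <= 3)%N ->
  mpoly_eq (lie_iter F1 l sL) (lie_iter F2 l sL) -> cl N i0 a1 b1 c1 l m = cl N i0 a2 b2 c2 l m.
  by move=> l m _ H; apply: H.
have cne : c1 i0 L != 0 by rewrite gt_eqF.
have Pne : a1 i0 L * c1 i0 L != 0 by rewrite mulf_neq0 // gt_eqF.
have part1 : (forall l : nat, (1 <= l <= 2)%N -> mpoly_eq (lie_iter F1 l sL) (lie_iter F2 l sL)) ->
     [/\ a1 i0 L = a2 i0 L, b1 i0 L = b2 i0 L & c1 i0 L = c2 i0 L].
  move=> H.
  have e1 := EQ 1%N (mon [:: U_ (N i0) L]) isT (H 1%N isT).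
  rewrite !(V1U h1 _ _ _ hL) eqxx in e1.
  have e2 := EQ 2%N (mon [:: enz (N i0); S_ (N i0) L.-1]) isT (H 2%N isT).
  rewrite !(V2YL i0 h1 h2) -e1 in e2.
  have e3 := EQ 2%N (mon [:: U_ (N i0) L]) isT (H 2%N isT).
  rewrite !(V2U i0 h1) -e1 in e3.
  have ea : a1 i0 L = a2 i0 L by apply: (mulIf cne).
  split => //.
  have := mulIf cne e3; move/eqP; rewrite eqr_opp => /eqP; apply: addIr.
split => // hL2 H j hj.
have H2' : forall l : nat, (1 <= l <= 2)%N -> mpoly_eq (lie_iter F1 l sL) (lie_iter F2 l sL).
  by move=> l /andP [l1 l2]; apply: H; rewrite l1 (leq_trans l2).
have [ea _ ec] := part1 H2'.
have hj1 : (0 < j)%N by case/andP: hj.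
have hjL : (j < L)%N by case/andP: hj => _ h; move: hL2 h; lia.
have e4 := EQ 3%N (mon [:: U_ (N i0) j; S_ (N i0) L.-1]) isT (H 3%N isT).
rewrite !(V3U h1 h2 _ _ _ hj1 hjL) -ea -ec in e4.
have e5 := EQ 3%N (mon [:: enz (N i0); S_ (N i0) j.-1; S_ (N i0) L.-1]) isT (H 3%N isT).
rewrite !(V3Y h1 h2 _ _ _ hj1 hjL) -ea -ec in e5.
split; last exact: (mulIf Pne e4).
by apply: oppr_inj; apply: (mulIf Pne e5).
Qed.
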